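(* Let $A\in\mathbb{R}^{n\times n}$, let $W\in\mathbb{R}^{n\times n}$ be symmetric positive definite, let $C=\mathrm{diag}(C_{11},\dots,C_{nn})$ be diagonal positive definite and $V=\mathrm{diag}(\sigma_1^2,\dots,\sigma_n^2)$ with $\sigma_j>0$. Let $\Sigma$ be the unique positive semidefinite solution of $\Sigma=A\Sigma A^T-A\Sigma C^T(C\Sigma C^T+V)^{-1}C\Sigma A^T+W$ (the steady-state a priori Kalman filter error covariance). Then $$\ln\det\Sigma\le\mathrm{tr}(A^TA)\frac{\sigma_l^2}{C_l^2}+\mathrm{tr}\,W.$$
   Context: The index $l$ is defined by $l=\arg\min_{1\le j\le n}C_{jj}^2/\sigma_j^2$, and $C_l:=C_{ll}$. *)

(* Defs.v *)
From HB Require Import structures.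
From mathcomp Require Import all_boot all_order all_algebra.
From mathcomp Require Import all_classical all_reals all_analysis.
Set Implicit Arguments. Unset Strict Implicit. Unset Printing Implicit Defensive.
Import Order.TTheory GRing.Theory Num.Theory.
Local Open Scope ring_scope.

Definition psd_mx (R : realType) (n : nat) (M : 'M[R]_n) : Prop :=
  M^T = M /\ forall v : 'cV[R]_n, 0 <= (v^T *m M *m v) 0 0.

Definition pd_mx (R : realType) (n : nat) (M : 'M[R]_n) : Prop :=
  M^T = M /\ forall v : 'cV[R]_n, v != 0 -> 0 < (v^T *m M *m v) 0 0.

Definition dare (R : realType) (n : nat) (A W C V S : 'M[R]_n) : Prop :=
  S = A *m S *m A^T
      - A *m S *m C^T *m invmx (C *m S *m C^T + V) *m C *m S *m A^T + W.

(* Main.v *)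
Require Import Defs.
From HB Require Import structures.
From mathcomp Require Import all_boot all_order all_algebra.
From mathcomp Require Import all_classical all_reals all_analysis.
From mathcomp Require Import ring lra.
Import Order.TTheory GRing.Theory Num.Theory.
Local Open Scope ring_scope.

Section Helpers.
Variable R : realType.

Definition form {n} (M : 'M[R]_n) (v : 'cV[R]_n) := (v^T *m M *m v) 0 0.

Lemma formD n (M N : 'M[R]_n) v : form (M + N) v = form M v + form N v.
Proof. by rewrite /form mulmxDr mulmxDl mxE. Qed.

Lemma formB n (M N : 'M[R]_n) v : form (M - N) v = form M v - form N v.
Proof. by rewrite /form mulmxBr mulmxBl mxE mxE mxE. Qed.

Lemma form_cong n m (X : 'M[R]_(n, m)) (M : 'M[R]_m) v :
  form (X *m M *m X^T) v = form M (X^T *m v).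
Proof. by rewrite /form trmx_mul trmxK !mulmxA. Qed.

Lemma form_diag n (d : 'rV[R]_n) v :
  form (diag_mx d) v = \sum_j d 0 j * v j 0 ^+ 2.
Proof.
rewrite /form mul_mx_diag !mxE; apply: eq_bigr => j _.
by rewrite !mxE; ring.
Qed.

Lemma diag_entry n (X : 'M[R]_n) i : X i i = form X (delta_mx i 0).
Proof.
rewrite /form trmx_delta -rowE -colE.
by rewrite !mxE.
Qed.

Lemma tr_cong_ge0 n m (B : 'M[R]_(n, m)) (M : 'M[R]_m) :
  (forall v, 0 <= form M v) -> 0 <= \tr (B *m M *m B^T).
Proof.
move=> HM; rewrite /mxtrace; apply: sumr_ge0 => i _.
by rewrite diag_entry form_cong.
Qed.

Lemma tr_tmul_ge0 n m (B : 'M[R]_(n, m)) : 0 <= \tr (B *m B^T).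
Proof.
have -> : B *m B^T = B *m 1%:M *m B^T by rewrite mulmx1.
apply: tr_cong_ge0 => v; rewrite /form mulmx1.
rewrite mxE; apply: sumr_ge0 => j _; rewrite mxE.
by rewrite -expr2 sqr_ge0.
Qed.


Lemma pd_form n (S : 'M[R]_n) : pd_mx S -> forall v, v != 0 -> 0 < form S v.
Proof. by case. Qed.

Lemma det_ln n (S : 'M[R]_n) : pd_mx S -> 0 < \det S /\ ln (\det S) <= \tr S - n%:R.
Proof.
elim: n S => [|n IH] S [Ssym Spos].
  rewrite det_mx00 ln1 /mxtrace big_ord0; split => //; lra.
pose S1 : 'M[R]_(1 + n) := S.
pose a := ulsubmx S1; pose b := ursubmx S1; pose c := dlsubmx S1; pose D := drsubmx S1.
have HS : S1 = block_mx a b c D by rewrite submxK.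
have Hsym : block_mx a^T c^T b^T D^T = block_mx a b c D by rewrite -tr_block_mx -HS.
have [_ Hcb _ _] := eq_block_mx Hsym.
pose a0 := a 0 0.
have ha : a = a0%:M by apply: mx11_scalar.
pose v0 : 'cV[R]_(1 + n) := col_mx 1%:M 0.
have a0pos : 0 < a0.
  have v0n : v0 != 0.
    apply/negP => /eqP /(congr1 usubmx); rewrite col_mxKu linear0 => /matrixP /(_ 0 0).
    rewrite !mxE /=; apply/eqP; exact: oner_neq0.
  have := Spos v0 v0n; congr (_ < _).
  change ((v0^T *m S1 *m v0) 0 0 = a0); rewrite /v0 tr_col_mx trmx1 linear0 /= HS mul_row_block !mul1mx !mul0mx !addr0.
  by rewrite mul_row_col mulmx1 mulmx0 addr0.
pose X := - a0^-1 *: b.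
pose E : 'M[R]_(1 + n, n) := col_mx X 1%:M.
pose S' := D - a0^-1 *: (c *m b).
have SE : S1 *m E = col_mx 0 S'.
  rewrite HS mul_block_col !mulmx1 ha mul_scalar_mx /X scalerA mulrN mulfV ?gt_eqF //.
  by rewrite scaleN1r addNr /S' scalemxAr scaleNr addrC mulmxN.
have S'E : S' = E^T *m S1 *m E.
  by rewrite -mulmxA SE tr_col_mx trmx1 mul_row_col mulmx0 mul1mx add0r.
have S'pd : pd_mx S'.
  split.
    by rewrite S'E !trmx_mul trmxK mulmxA; congr (_ *m _ *m _); exact: Ssym.
  move=> w wn0.
  have Ew : E *m w != 0.
    apply: contra wn0 => /eqP /(congr1 dsubmx).
    by rewrite mul_col_mx col_mxKd mul1mx linear0 => ->.
  have := Spos _ Ew; congr (_ < _).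
  by rewrite S'E trmx_mul !mulmxA.
have [dpos IHl] := IH _ S'pd.
have Hdet : \det S = a0 * \det S'.
  have -> : \det S = \det S1 by [].
  have -> : S1 = block_mx 1%:M 0 (a0^-1 *: c) 1%:M *m block_mx a b 0 S'.
    rewrite mulmx_block !mul1mx !mul0mx !addr0 ?mulmx0 ?addr0 ?mulmx1.
    have -> : a0^-1 *: c *m a = c.
      by rewrite ha mul_mx_scalar scalerA mulfV ?gt_eqF // scale1r.
    by rewrite /S' -scalemxAl addrC subrK HS.
  by rewrite det_mulmx det_lblock det_ublock !det1 det_mx11 !mul1r.
have Htr : \tr S = a0 + \tr D.
  have -> : \tr S = \tr S1 by [].
  by rewrite HS mxtrace_block trace_mx11.
have HtrS' : \tr S' <= \tr D.
  rewrite /S' raddfB /= mxtraceZ.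
  have h := @tr_tmul_ge0 _ _ c; rewrite Hcb in h.
  have : 0 <= a0^-1 * \tr (c *m b).
    by apply: mulr_ge0; [rewrite invr_ge0 ltW | exact: h].
  lra.
rewrite Hdet; split; first exact: mulr_gt0.
rewrite lnM ?posrE //.
have : ln a0 <= a0 - 1.
  have := @le_ln1Dx R (a0 - 1); rewrite (_ : 1 + (a0 - 1) = a0); last by ring.
  apply; lra.
rewrite Htr -natr1; lra.
Qed.


Lemma zl (V : zmodType) (s xcs scx q xv kcs : V) :
  s - xcs - (scx - q) + xv = s - kcs + ((q + xv) - scx - (xcs - kcs)).
Proof.
rewrite !opprB !addrA.
rewrite [RHS]addrC !addrA.
rewrite (addrAC _ (- scx) kcs) (addrAC _ xv kcs) (addrAC _ q kcs) subrK (addrC (- xcs) s).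
by rewrite (addrAC _ (- scx) xv).
Qed.

Lemma joseph n (S Cm Vm K X : 'M[R]_n) :
  let M := Cm *m S *m Cm^T + Vm in
  K *m M = S *m Cm^T -> M *m K^T = Cm *m S ->
  (1%:M - X *m Cm) *m S *m (1%:M - X *m Cm)^T + X *m Vm *m X^T
  = (S - K *m Cm *m S) + (X - K) *m M *m (X - K)^T.
Proof.
move=> M hKM hMK.
rewrite !linearB /= trmx1 trmx_mul.
rewrite ?mulmxBl ?mulmxBr ?mul1mx ?mulmx1.
rewrite -[X *m M *m K^T]mulmxA hMK -[K *m M *m K^T]mulmxA hMK hKM /M.
rewrite mulmxDr mulmxDl !mulmxA.
exact: zl.
Qed.

End Helpers.
Arguments form {R n}.
Arguments formD {R n}.
Arguments formB {R n}.
Arguments form_cong {R n m}.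
Arguments form_diag {R n}.
Arguments tr_cong_ge0 {R n m}.
Arguments det_ln {R n}.
Arguments joseph {R n}.

Theorem theorem4 (R : realType) (n : nat) (A W C Sigma : 'M[R]_n)
    (sigma : 'I_n -> R) (l : 'I_n) :
  pd_mx W ->
  is_diag_mx C -> (forall i, 0 < C i i) ->
  (forall j, 0 < sigma j) ->
  let V := diag_mx (\row_j (sigma j ^+ 2)) in
  psd_mx Sigma -> dare A W C V Sigma ->
  (forall S, psd_mx S -> dare A W C V S -> S = Sigma) ->
  (forall j, C l l ^+ 2 / sigma l ^+ 2 <= C j j ^+ 2 / sigma j ^+ 2) ->
  ln (\det Sigma) <= \tr (A^T *m A) * (sigma l ^+ 2 / C l l ^+ 2) + \tr W.
Proof.
move=> [Wsym Wpd] Cdiag Cpos sigpos V [Ssym Spsd] Hdare _ Hl.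
pose s := sigma l ^+ 2 / C l l ^+ 2.
have Vsym : V^T = V by rewrite tr_diag_mx.
have Ceq : C = diag_mx (\row_j C j j).
  apply/matrixP => i j; rewrite !mxE; case: (eqVneq i j) => [->|nij] /=.
    by rewrite mulr1n.
  by rewrite mulr0n; move/is_diag_mxP: Cdiag; apply.
have Csym : C^T = C by rewrite Ceq tr_diag_mx.
pose M := C *m Sigma *m C^T + V.
have formV : forall v : 'cV[R]_n, v != 0 -> 0 < form V v.
  move=> v vn0; rewrite form_diag.
  have [j vj] : exists j, v j 0 != 0.
    apply/existsP; move: vn0; apply: contraR; rewrite negb_exists => /forallP H.
    apply/eqP/matrixP => i k; rewrite (ord1 k) mxE; move: (H i); by rewrite negbK => /eqP.
  rewrite (bigD1 j) //=; apply: ltr_pwDl.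
    by rewrite mxE; apply: mulr_gt0; [apply: exprn_gt0 | rewrite exprn_even_gt0 //].
  apply: sumr_ge0 => i _; rewrite mxE; apply: mulr_ge0; [apply: exprn_ge0; exact: ltW | exact: sqr_ge0].
have formM : forall v, form M v = form Sigma (C^T *m v) + form V v.
  by move=> u; rewrite /M formD form_cong.
have Mpd : forall v : 'cV[R]_n, v != 0 -> 0 < form M v.
  move=> u un0; rewrite formM; apply: ltr_wpDl; [exact: Spsd | exact: formV un0].
have Munit : M \in unitmx.
  rewrite unitmxE unitfE; apply/negP => /det0P [w wn0 wM].
  have := Mpd w^T; rewrite trmx_eq0 => /(_ wn0).
  by rewrite /form trmxK wM mul0mx mxE ltxx.
pose Mi := invmx M.
have Msym : M^T = M by rewrite /M linearD /= !trmx_mul trmxK Ssym Vsym mulmxA.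
have Misym : Mi^T = Mi by rewrite /Mi trmx_inv Msym.
pose K := Sigma *m C^T *m Mi.
have hKM : K *m M = Sigma *m C^T by rewrite /K -mulmxA mulVmx // mulmx1.
have hMK : M *m K^T = C *m Sigma.
  by rewrite /K !trmx_mul Misym trmxK Ssym !mulmxA /Mi mulmxV // mul1mx.
pose P := Sigma - K *m C *m Sigma.
have HSig : Sigma = A *m P *m A^T + W.
  rewrite {1}Hdare /P mulmxBr mulmxBl /K !mulmxA.
  done.
pose J := fun X : 'M[R]_n =>
  (1%:M - X *m C) *m Sigma *m (1%:M - X *m C)^T + X *m V *m X^T.
have HJ : forall X, J X = P + (X - K) *m M *m (X - K)^T.
  by move=> X; rewrite /J /P (joseph Sigma C V K X).
have HP : P = J K by rewrite HJ subrr mul0mx mul0mx addr0.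
have formP : forall v, 0 <= form P v.
  move=> u; rewrite HP /J formD !form_cong; apply: addr_ge0; first exact: Spsd.
  rewrite /V form_diag; apply: sumr_ge0 => i _; rewrite mxE.
  by apply: mulr_ge0; [apply: sqr_ge0 | apply: sqr_ge0].
pose Ci := diag_mx (\row_j (C j j)^-1).
have CiC : Ci *m C = 1%:M.
  rewrite Ceq /Ci mul_diag_mx; apply/matrixP => i j; rewrite !mxE.
  case: (eqVneq i j) => [->|nij] /=; last by rewrite !mulr0n mulr0.
  by rewrite !mulr1n mulVf // gt_eqF.
pose g := \row_j (sigma j ^+ 2 / C j j ^+ 2).
have HG : J Ci = diag_mx g.
  rewrite /J CiC subrr mul0mx mul0mx add0r /Ci tr_diag_mx /V mul_diag_mx mul_mx_diag.
  apply/matrixP => i j; rewrite !mxE.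
  case: (eqVneq i j) => [->|nij] /=; last by rewrite !mulr0n mulr0 mul0r.
  rewrite !mulr1n; field; exact: lt0r_neq0.
have formMge : forall v, 0 <= form M v.
  move=> u; rewrite formM; apply: addr_ge0; first exact: Spsd.
  rewrite /V form_diag; apply: sumr_ge0 => i _; rewrite mxE.
  by apply: mulr_ge0; [apply: sqr_ge0 | apply: sqr_ge0].
have gs : forall j, g 0 j <= s.
  move=> j; rewrite /s mxE.
  have h1 : forall k, sigma k ^+ 2 / C k k ^+ 2 = (C k k ^+ 2 / sigma k ^+ 2)^-1.
    by move=> k; rewrite invf_div.
  rewrite !h1 lef_pV2 ?posrE ?divr_gt0 ?exprn_gt0 //.
have formsG : forall v, 0 <= form (s%:M - diag_mx g) v.
  move=> u; have -> : s%:M - diag_mx g = diag_mx (\row_j (s - g 0 j)).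
    apply/matrixP => i j; rewrite !mxE.
    by case: (eqVneq i j) => [->|nij] /=; rewrite ?mulr1n ?mulr0n ?subr0.
  rewrite form_diag; apply: sumr_ge0 => i _; rewrite mxE.
  by apply: mulr_ge0; [rewrite subr_ge0 | apply: sqr_ge0].
have HPG : P = diag_mx g - (Ci - K) *m M *m (Ci - K)^T by rewrite -HG HJ addrK.
have trS : \tr Sigma <= s * \tr (A^T *m A) + \tr W.
  rewrite {1}HSig raddfD /= lerD2r HPG mulmxBr mulmxBl raddfB /=.
  have h1 : 0 <= \tr (A *m ((Ci - K) *m M *m (Ci - K)^T) *m A^T).
    have -> : A *m ((Ci - K) *m M *m (Ci - K)^T) *m A^T
        = (A *m (Ci - K)) *m M *m (A *m (Ci - K))^T.
      by rewrite trmx_mul !mulmxA.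
    exact: tr_cong_ge0.
  have h2 : 0 <= \tr (A *m (s%:M - diag_mx g) *m A^T) by exact: tr_cong_ge0.
  move: h2; rewrite mulmxBr mulmxBl raddfB /= mul_mx_scalar -scalemxAl mxtraceZ.
  rewrite mxtrace_mulC => h2; lra.
have Spd : pd_mx Sigma.
  split => // u un0; rewrite -/(form Sigma u) HSig formD form_cong.
  apply: ltr_wpDl; [exact: formP | exact: Wpd].
have [_ hl] := det_ln Sigma Spd.
have : 0 <= (n%:R : R) by [].
rewrite -/s mulrC; lra.
Qed.
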